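(* Let $d\ge 1$ and $n,k\ge 0$ be integers. Let $\mathcal{L}_{\leq d}(n,k)$ be the set of lonesum $0$-$1$ matrices with $n$ rows and $k$ columns that have no all-zero row and no all-zero column, and in which at most $d$ columns are of the same type and at most $d$ rows are of the same type. Then \[ |\mathcal{L}_{\leq d}(n,k)|=\sum_{m=0}^{\min(n,k)} m!\,S_{\leq d}(n,m)\; m!\,S_{\leq d}(k,m). \]
   Context: A $0$-$1$ matrix is lonesum if it is uniquely determined by its vector of row sums and its vector of column sums; equivalently, it contains no $2\times 2$ submatrix (rows $i<i'$, columns $j<j'$) equal to $\begin{pmatrix}1&0\\0&1\end{pmatrix}$ or $\begin{pmatrix}0&1\\1&0\end{pmatrix}$. The type of a column (resp. row) is the column (resp. row) vector itself; two columns have the same type iff they are identical vectors. $S_{\leq d}(n,m)$ denotes the restricted Stirling number of the second kind: the number of partitions of an $n$-element set into $m$ non-empty blocks each of size at most $d$ (with $S_{\le d}(0,0)=1$). *)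

(* Defs.v *)
From mathcomp Require Import all_boot all_order all_algebra.
Set Implicit Arguments. Unset Strict Implicit. Unset Printing Implicit Defensive.

Definition lonesum (n k : nat) (A : 'M[bool]_(n, k)) : bool :=
  [forall i : 'I_n, forall i' : 'I_n, forall j : 'I_k, forall j' : 'I_k,
     ((i < i') && (j < j')) ==>
     ~~ ( (A i j && ~~ A i j' && ~~ A i' j && A i' j')
       || (~~ A i j && A i j' && A i' j && ~~ A i' j') )].

Definition no_zero_row (n k : nat) (A : 'M[bool]_(n, k)) : bool :=
  [forall i : 'I_n, exists j : 'I_k, A i j].

Definition no_zero_col (n k : nat) (A : 'M[bool]_(n, k)) : bool :=
  [forall j : 'I_k, exists i : 'I_n, A i j].

Definition col_types_le (d n k : nat) (A : 'M[bool]_(n, k)) : bool :=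
  [forall j : 'I_k, #|[set j' : 'I_k | col j' A == col j A]| <= d].

Definition row_types_le (d n k : nat) (A : 'M[bool]_(n, k)) : bool :=
  [forall i : 'I_n, #|[set i' : 'I_n | row i' A == row i A]| <= d].

Definition Lset (d n k : nat) : {set 'M[bool]_(n, k)} :=
  [set A : 'M[bool]_(n, k) | [&& lonesum A, no_zero_row A, no_zero_col A,
                               col_types_le d A & row_types_le d A]].

Definition stirling2_le (d n m : nat) : nat :=
  #|[set P : {set {set 'I_n}} | [&& partition P [set: 'I_n], #|P| == m
                                  & [forall B in P, #|B| <= d]]]|.

(* Main.v *)
Require Import Defs.
From mathcomp Require Import all_boot all_order all_algebra.
From mathcomp Require Import zify.
Set Implicit Arguments. Unset Strict Implicit. Unset Printing Implicit Defensive.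

Lemma card_lt (m x : nat) : x <= m -> #|[set t : 'I_m | t < x]| = x.
Proof.
move=> le; have -> : [set t : 'I_m | t < x] = widen_ord le @: [set: 'I_x].
  apply/setP => t; rewrite inE; apply/idP/imsetP => [lt|[u _ ->]]; last by rewrite /= ltn_ord.
  by exists (Ordinal lt) => //; apply: val_inj.
rewrite card_imset ?cardsT ?card_ord // => u v e; apply: val_inj.
by move: e => /(congr1 val).
Qed.

Definition surjT (d n m : nat) : {set {ffun 'I_n -> 'I_m}} :=
  [set f : {ffun 'I_n -> 'I_m} | [forall t, exists i, f i == t]
                                 && [forall t, #|f @^-1: [set t]| <= d]].

Definition stirSet (d n m : nat) : {set {set {set 'I_n}}} :=
  [set P : {set {set 'I_n}} | [&& partition P [set: 'I_n], #|P| == m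
                                  & [forall B in P, #|B| <= d]]].

Definition blocks n m (f : {ffun 'I_n -> 'I_m}) : {set {set 'I_n}} :=
  (fun t => f @^-1: [set t]) @: [set: 'I_m].

Lemma surjTP d n m (f : {ffun 'I_n -> 'I_m}) : f \in surjT d n m ->
  (forall t, exists i, f i = t) /\ (forall t, #|f @^-1: [set t]| <= d).
Proof.
rewrite inE => /andP [/forallP s /forallP b]; split => // t.
by case/existsP: (s t) => i /eqP; exists i.
Qed.

Lemma blocks_stir d n m f : f \in surjT d n m -> blocks f \in stirSet d n m.
Proof.
move=> /surjTP [s b].
have inj : injective (fun t => f @^-1: [set t]).
  move=> t t' e; have [i fi] := s t.
  have : i \in f @^-1: [set t] by rewrite !inE fi.
  by rewrite e !inE fi => /eqP.
rewrite inE; apply/and3P; split.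
- apply/and3P; split.
  + apply/eqP/setP => i; rewrite inE; apply/bigcupP.
    by exists (f @^-1: [set f i]); [apply: imset_f | rewrite !inE].
  + apply/trivIsetP => A B /imsetP [t _ ->] /imsetP [t' _ ->] ne.
    rewrite -setI_eq0; apply/eqP/setP => i; rewrite !inE.
    apply/negbTE; apply/negP => /andP [/eqP e1 /eqP e2].
    by move: ne; rewrite -e1 -e2 eqxx.
  + apply/negP => /imsetP [t _ e]; have [i fi] := s t.
    have : i \in f @^-1: [set t] by rewrite !inE fi.
    by rewrite -e inE.
- by rewrite card_imset // cardsT card_ord.
- by apply/forallP => B; apply/implyP => /imsetP [t _ ->].
Qed.

Lemma fiber_card d n m P : P \in stirSet d n m ->
  #|[set f in surjT d n m | blocks f == P]| = m`!.
Proof.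
rewrite inE => /and3P [/and3P [/eqP covP trivP set0P] /eqP cardP /forallP leP].
pose phi (f : {ffun 'I_n -> 'I_m}) := [ffun t => f @^-1: [set t]].
have phi_inj : injective phi.
  move=> f f' e; apply/ffunP => i.
  have : i \in phi f (f i) by rewrite ffunE !inE.
  by rewrite e ffunE !inE => /eqP.
rewrite -(card_imset _ phi_inj).
have -> : phi @: [set f in surjT d n m | blocks f == P]
          = [set g in ffun_on (mem P) | injectiveb g].
  apply/setP => g; apply/imsetP/idP.
  - move=> [f]; rewrite inE => /andP [fs /eqP bl] ->.
    have [s _] := surjTP fs.
    rewrite inE; apply/andP; split.
      by apply/ffun_onP => t; rewrite ffunE -bl; apply: imset_f.
    apply/injectiveP => t t'; rewrite !ffunE => e.
    have [i fi] := s t.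
    have : i \in f @^-1: [set t] by rewrite !inE fi.
    by rewrite e !inE fi => /eqP.
  - rewrite inE => /andP [/ffun_onP gP /injectiveP ginj].
    have imP : g @: [set: 'I_m] = P.
      apply/eqP; rewrite eqEcard cardP card_imset ?cardsT ?card_ord //.
      rewrite leqnn andbT; apply/subsetP => B /imsetP [t _ ->]; exact: gP.
    have ex : forall i, exists t, i \in g t.
      move=> i; have : i \in cover P by rewrite covP inE.
      move/bigcupP => [B]; rewrite -imP => /imsetP [t _ ->] it.
      by exists t.
    have [h hP] := fin_all_exists ex.
    have key : forall i t, (i \in g t) = (h i == t).
      move=> i t; apply/idP/eqP => [it|<-]; last exact: hP.
      apply: ginj; apply/eqP; apply/negP => /negP ne.
      have := (trivIsetP trivP) _ _ (gP (h i)) (gP t) ne.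
      by move/disjointFr => /(_ i (hP i)); rewrite it.
    have pre : forall t, (finfun h) @^-1: [set t] = g t.
      by move=> t; apply/setP => i; rewrite !inE ffunE key.
    exists (finfun h).
      rewrite inE; apply/andP; split; first (rewrite inE; apply/andP; split).
      + apply/forallP => t; have : g t != set0.
          by apply/negP => /eqP e; move: set0P; rewrite -e gP.
        case/set0Pn => i; rewrite key => /eqP <-.
        by apply/existsP; exists i; rewrite ffunE.
      + by apply/forallP => t; rewrite pre; exact: (implyP (leP (g t)) (gP t)).
      + rewrite /blocks -imP; apply/eqP/eq_imset => t; exact: pre.
    by apply/ffunP => t; rewrite ffunE pre.
by rewrite card_inj_ffuns_on cardP card_ord ffactnn.
Qed.

Lemma card_surjT d n m : #|surjT d n m| = m`! * stirling2_le d n m.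
Proof.
rewrite -sum1_card (partition_big (@blocks n m) (mem (stirSet d n m))); last first.
  by move=> f; apply: blocks_stir.
rewrite /stirling2_le -/(stirSet d n m) mulnC -sum_nat_const.
apply: eq_bigr => P PS; rewrite -(fiber_card PS) -sum1_card.
by apply: eq_bigl => f; rewrite inE.
Qed.
Section Lone.
Variables n k : nat.
Implicit Types A : 'M[bool]_(n, k).

Definition Sr A i := [set j | A i j].
Definition rt A := (Sr A) @: [set: 'I_n].
Definition fA A i := #|(Sr A) @: [set i' | Sr A i' \proper Sr A i]|.
Definition sA A j := #|(Sr A) @: [set i' | ~~ A i' j]|.

Lemma lonesumP A : lonesum A ->
  forall i i' j j', A i j -> A i' j' -> A i j' || A i' j.
Proof.
move=> /forallP L.
have L0 : forall (i i' : 'I_n) (j j' : 'I_k), i < i' -> j < j' ->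
   ~~ ( (A i j && ~~ A i j' && ~~ A i' j && A i' j')
       || (~~ A i j && A i j' && A i' j && ~~ A i' j') ).
  move=> i i' j j' lt1 lt2.
  move: (L i) => /forallP /(_ i') /forallP /(_ j) /forallP /(_ j') /implyP; apply.
  by rewrite lt1 lt2.
move=> i i' j j' a1 a2.
case: (ltngtP i i') => [lt1|lt1|/val_inj e1]; last by move: a2; rewrite -e1 => ->.
- case: (ltngtP j j') => [lt2|lt2|/val_inj e2]; last by rewrite -e2 a1.
  + by move: (L0 _ _ _ _ lt1 lt2); rewrite a1 a2; case: (A i j'); case: (A i' j).
  + by move: (L0 _ _ _ _ lt1 lt2); rewrite a1 a2; case: (A i j'); case: (A i' j).
- case: (ltngtP j j') => [lt2|lt2|/val_inj e2]; last by rewrite -e2 a1.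
  + by move: (L0 _ _ _ _ lt1 lt2); rewrite a1 a2; case: (A i j'); case: (A i' j).
  + by move: (L0 _ _ _ _ lt1 lt2); rewrite a1 a2; case: (A i j'); case: (A i' j).
Qed.

Lemma chain A : lonesum A -> forall i i',
  (Sr A i \subset Sr A i') || (Sr A i' \subset Sr A i).
Proof.
move=> L i i'; case: (boolP (Sr A i \subset Sr A i')) => //= /subsetPn [j].
rewrite !inE => ji nji'; apply/subsetP => j'; rewrite !inE => ji'.
by move: (lonesumP L ji ji'); rewrite (negbTE nji') orbF.
Qed.

Lemma L2 A : lonesum A -> forall i j, A i j = (sA A j <= fA A i).
Proof.
move=> L i j; case: (boolP (A i j)) => a.
- apply/esym/subset_leq_card/imsetS/subsetP => i'; rewrite !inE => na.
  rewrite properEneq; case/orP: (chain L i' i) => sub.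
    rewrite sub andbT; apply/negP => /eqP e.
    have : j \in Sr A i' by rewrite e inE a.
    by rewrite inE (negbTE na).
  have : j \in Sr A i' by apply: (subsetP sub); rewrite inE.
  by rewrite inE (negbTE na).
- apply/esym/negbTE; rewrite -ltnNge; apply: proper_card; apply/properP; split.
    apply/imsetS/subsetP => i'; rewrite !inE => /properP [sub _].
    apply/negP => a'; have : j \in Sr A i by apply: (subsetP sub); rewrite inE.
    by rewrite inE (negbTE a).
  exists (Sr A i); first by apply: imset_f; rewrite inE.
  apply/imsetP => [[i' ]]; rewrite inE => pr e.
  by move: pr; rewrite -e properxx.
Qed.

Lemma fA_le A i i' : Sr A i \subset Sr A i' -> fA A i <= fA A i'.
Proof.
move=> sub; apply/subset_leq_card/imsetS/subsetP => i''; rewrite !inE => pr.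
exact: proper_sub_trans pr sub.
Qed.

Lemma fA_lt A i i' : Sr A i \proper Sr A i' -> fA A i < fA A i'.
Proof.
move=> pr; apply: proper_card; apply/properP; split.
  apply/imsetS/subsetP => i''; rewrite !inE => pr'.
  exact: proper_trans pr' pr.
exists (Sr A i); first by apply: imset_f; rewrite inE.
apply/imsetP => [[i'' ]]; rewrite inE => pr' e.
by move: pr'; rewrite -e properxx.
Qed.

Lemma fA_eq A : lonesum A -> forall i i', fA A i = fA A i' -> Sr A i = Sr A i'.
Proof.
move=> L i i' e; case: (boolP (Sr A i == Sr A i')) => [/eqP -> //|ne].
have ch := chain L i i'.
case/orP: ch => sub.
  have : Sr A i \proper Sr A i' by rewrite properEneq ne sub.
  by move/fA_lt; rewrite e ltnn.
have : Sr A i' \proper Sr A i by rewrite properEneq eq_sym ne sub.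
by move/fA_lt; rewrite e ltnn.
Qed.

Lemma fA_bound A i : fA A i < #|rt A|.
Proof.
apply: proper_card; apply/properP; split.
  by apply/imsetS/subsetP.
exists (Sr A i); first by apply: imset_f.
apply/imsetP => [[i' ]]; rewrite inE => pr' e.
by move: pr'; rewrite -e properxx.
Qed.

Lemma sA_bound A : no_zero_col A -> forall j, sA A j < #|rt A|.
Proof.
move=> /forallP C j; case/existsP: (C j) => i0 a.
apply: proper_card; apply/properP; split.
  by apply/imsetS/subsetP.
exists (Sr A i0); first by apply: imset_f.
apply/imsetP => [[i' ]]; rewrite inE => na e.
have : j \in Sr A i' by rewrite -e inE a.
by rewrite inE (negbTE na).
Qed.

Lemma fA_surj A : lonesum A -> forall t, t < #|rt A| -> exists i, fA A i = t.
Proof.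
move=> L t lt; set r := #|rt A|.
pose F (S0 : {set 'I_k}) : 'I_r.+1 :=
  inord #|(Sr A) @: [set i' | Sr A i' \proper S0]|.
have FS : forall i, F (Sr A i) = inord (fA A i) by [].
have Finj : {in rt A &, injective F}.
  move=> _ _ /imsetP [i _ ->] /imsetP [i' _ ->]; rewrite !FS => e.
  apply: fA_eq => //; move: e => /(congr1 (@nat_of_ord _)).
  by rewrite !inordK // ltnS ltnW // fA_bound.
have sub : F @: rt A \subset [set u : 'I_r.+1 | u < r].
  apply/subsetP => _ /imsetP [_ /imsetP [i _ ->] ->]; rewrite inE FS inordK.
    exact: fA_bound.
  by rewrite ltnS ltnW // fA_bound.
have eqS : F @: rt A = [set u : 'I_r.+1 | u < r].
  apply/eqP; rewrite eqEcard sub /=.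
  rewrite (card_lt (leqnSn r)) (card_in_imset Finj) leqnn.
  done.
have : (inord t : 'I_r.+1) \in [set u : 'I_r.+1 | u < r].
  by rewrite inE inordK // ltnS ltnW.
rewrite -eqS => /imsetP [_ /imsetP [i _ ->]]; rewrite FS => /(congr1 (@nat_of_ord _)).
have h1 : t < r.+1 by rewrite ltnS ltnW.
have h2 : fA A i < r.+1 by rewrite ltnS ltnW // fA_bound.
by rewrite (inordK h1) (inordK h2) => ->; exists i.
Qed.

Lemma sA_surj A : lonesum A -> no_zero_row A ->
  forall t, t < #|rt A| -> exists j, sA A j = t.
Proof.
move=> L /forallP R t lt.
have [i fi] := fA_surj L lt.
case: t lt fi => [|t] lt fi.
  case/existsP: (R i) => j a; exists j.
  by move: a; rewrite (L2 L) fi leqn0 => /eqP.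
have [i' fi'] := fA_surj L (ltnW lt).
have : ~~ (Sr A i \subset Sr A i').
  by apply/negP => /fA_le; rewrite fi fi' ltnn.
case/subsetPn => j; rewrite !inE => a na; exists j.
move: a na; rewrite !(L2 L) fi fi' => a na; lia.
Qed.

Lemma row_eq A i i' : Sr A i = Sr A i' -> row i A = row i' A.
Proof.
move=> e; apply/rowP => j; rewrite !mxE.
have := congr1 (fun S0 : {set 'I_k} => j \in S0) e; by rewrite /= !inE.
Qed.

End Lone.

Definition Mx n k m (f : {ffun 'I_n -> 'I_m}) (s : {ffun 'I_k -> 'I_m}) :
  'M[bool]_(n, k) := \matrix_(i, j) (s j <= f i).

Section Mx.
Variables d n k m : nat.
Variables (f : {ffun 'I_n -> 'I_m}) (s : {ffun 'I_k -> 'I_m}).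
Hypothesis fs : forall t, exists i, f i = t.
Hypothesis ss : forall t, exists j, s j = t.

Let A := Mx f s.
Let h (t : 'I_m) : {set 'I_k} := [set j | s j <= t].

Lemma Sr_Mx i : Sr A i = h (f i).
Proof. by apply/setP => j; rewrite !inE mxE. Qed.

Lemma h_inj : injective h.
Proof.
move=> t t' e; apply/val_inj/anti_leq/andP; split.
  have [j sj] := ss t.
  have : j \in h t by rewrite inE sj.
  by rewrite e inE sj.
have [j sj] := ss t'.
have : j \in h t' by rewrite inE sj.
by rewrite -e inE sj.
Qed.

Lemma h_proper t t' : (h t \proper h t') = (t < t').
Proof.
rewrite properEneq; case: (ltngtP t t') => [lt|lt|/val_inj e].
- rewrite andbC; apply/andP; split.
    by apply/subsetP => j; rewrite !inE => le; apply: leq_trans le (ltnW lt).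
  by apply/negP => /eqP /h_inj e; move: lt; rewrite e ltnn.
- apply/negP => /andP [_ /subsetP sub].
  have [j sj] := ss t.
  by have := sub j; rewrite !inE sj leqnn => /(_ isT); rewrite leqNgt lt.
- by rewrite e eqxx.
Qed.

Lemma imf_lt (x : nat) : x <= m -> f @: [set i | f i < x] = [set t : 'I_m | t < x].
Proof.
move=> le; apply/setP => t; rewrite inE; apply/imsetP/idP => [[i]|lt].
  by rewrite inE => lt ->.
by have [i fi] := fs t; exists i; rewrite ?inE fi.
Qed.

Lemma fA_Mx i : fA A i = f i.
Proof.
rewrite /fA.
have -> : [set i' | Sr A i' \proper Sr A i] = [set i' | f i' < f i].
  by apply/setP => i'; rewrite !inE !Sr_Mx h_proper.
have -> : (Sr A) @: [set i' | f i' < f i] = h @: (f @: [set i' | f i' < f i]).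
  rewrite -imset_comp; apply: eq_imset => i'; exact: Sr_Mx.
by rewrite card_imset; [rewrite imf_lt ?card_lt // ltnW | exact: h_inj].
Qed.

Lemma sA_Mx j : sA A j = s j.
Proof.
rewrite /sA.
have -> : [set i' | ~~ A i' j] = [set i' | f i' < s j].
  by apply/setP => i'; rewrite !inE mxE ltnNge.
have -> : (Sr A) @: [set i' | f i' < s j] = h @: (f @: [set i' | f i' < s j]).
  rewrite -imset_comp; apply: eq_imset => i'; exact: Sr_Mx.
by rewrite card_imset; [rewrite imf_lt ?card_lt // ltnW | exact: h_inj].
Qed.

Lemma rt_Mx : #|rt A| = m.
Proof.
rewrite /rt.
have -> : (Sr A) @: [set: 'I_n] = h @: (f @: [set: 'I_n]).
  rewrite -imset_comp; apply: eq_imset => i'; exact: Sr_Mx.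
have -> : f @: [set: 'I_n] = [set: 'I_m].
  apply/setP => t; rewrite inE; have [i <-] := fs t; exact: imset_f.
by rewrite card_imset ?cardsT ?card_ord //; exact: h_inj.
Qed.

End Mx.

Lemma Mx_Lset d n k m (f : {ffun 'I_n -> 'I_m}) (s : {ffun 'I_k -> 'I_m}) :
  f \in surjT d n m -> s \in surjT d k m -> Mx f s \in Lset d n k.
Proof.
move=> /surjTP [fs fb] /surjTP [ss sb].
rewrite inE; apply/and5P; split.
- apply/forallP => i; apply/forallP => i'; apply/forallP => j; apply/forallP => j'.
  apply/implyP => _; rewrite !mxE; lia.
- apply/forallP => i; have [j sj] := ss (f i).
  by apply/existsP; exists j; rewrite mxE sj.
- apply/forallP => j; have [i fi] := fs (s j).
  by apply/existsP; exists i; rewrite mxE fi.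
- apply/forallP => j; apply: leq_trans (sb (s j)).
  apply/subset_leq_card/subsetP => j'; rewrite !inE => /eqP e.
  apply/eqP/val_inj/anti_leq/andP; split.
    have [i fi] := fs (s j).
    have := congr1 (fun c : 'cV_n => c i ord0) e; rewrite /= !mxE fi leqnn.
    by move=> ->.
  have [i fi] := fs (s j').
  have := congr1 (fun c : 'cV_n => c i ord0) e; rewrite /= !mxE fi leqnn.
  by move=> <-.
- apply/forallP => i; apply: leq_trans (fb (f i)).
  apply/subset_leq_card/subsetP => i'; rewrite !inE => /eqP e.
  apply/eqP/val_inj/anti_leq/andP; split.
    have [j sj] := ss (f i').
    have := congr1 (fun c : 'rV_k => c ord0 j) e; rewrite /= !mxE sj leqnn.
    by move=> <-.
  have [j sj] := ss (f i).
  have := congr1 (fun c : 'rV_k => c ord0 j) e; rewrite /= !mxE sj leqnn.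
  by move=> ->.
Qed.

Lemma Lset_Mx d n k (A : 'M[bool]_(n, k)) : A \in Lset d n k ->
  exists f : {ffun 'I_n -> 'I_#|rt A|}, exists s : {ffun 'I_k -> 'I_#|rt A|},
    [/\ f \in surjT d n #|rt A|, s \in surjT d k #|rt A| & Mx f s = A].
Proof.
rewrite inE => /and5P [L R C /forallP CT /forallP RT].
exists [ffun i => Ordinal (fA_bound A i)], [ffun j => Ordinal (sA_bound C j)].
split.
- rewrite inE; apply/andP; split.
    apply/forallP => t; have [i fi] := fA_surj L (ltn_ord t).
    by apply/existsP; exists i; rewrite ffunE; apply/eqP/val_inj.
  apply/forallP => t; case: (set_0Vmem ([ffun i => Ordinal (fA_bound A i)] @^-1: [set t])) => [->|[i0]].
    by rewrite cards0.
  rewrite !inE ffunE => /eqP e0; apply: leq_trans (RT i0).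
  apply/subset_leq_card/subsetP => i; rewrite !inE ffunE => /eqP e.
  apply/eqP/row_eq/(fA_eq L).
  by rewrite -[fA A i]/(nat_of_ord (Ordinal (fA_bound A i))) e -e0.
- rewrite inE; apply/andP; split.
    apply/forallP => t; have [j sj] := sA_surj L R (ltn_ord t).
    by apply/existsP; exists j; rewrite ffunE; apply/eqP/val_inj.
  apply/forallP => t; case: (set_0Vmem ([ffun j => Ordinal (sA_bound C j)] @^-1: [set t])) => [->|[j0]].
    by rewrite cards0.
  rewrite !inE ffunE => /eqP e0; apply: leq_trans (CT j0).
  apply/subset_leq_card/subsetP => j; rewrite !inE ffunE => /eqP e.
  have e' : sA A j = sA A j0.
    by rewrite -[sA A j]/(nat_of_ord (Ordinal (sA_bound C j))) e -e0.
  by apply/eqP/colP => i; rewrite !mxE !(L2 L) e'.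
- by apply/matrixP => i j; rewrite !mxE !ffunE /= (L2 L).
Qed.

Lemma card_Lm d n k m : #|[set A in Lset d n k | #|rt A| == m]|
   = #|surjT d n m| * #|surjT d k m|.
Proof.
rewrite -cardsX.
have -> : [set A in Lset d n k | #|rt A| == m]
   = (fun p => Mx p.1 p.2) @: setX (surjT d n m) (surjT d k m).
  apply/setP => A; rewrite inE; apply/andP/imsetP.
  - move=> [AL /eqP e]; subst m; have [f [s [fS sS e]]] := Lset_Mx AL.
    by exists (f, s) => //; rewrite inE fS sS.
  - move=> [[f s]]; rewrite inE /= => /andP [fS sS] ->; split; first exact: Mx_Lset.
    have [fs _] := surjTP fS; have [ss _] := surjTP sS.
    by rewrite rt_Mx.
apply: card_in_imset => [[f s] [f' s']]; rewrite !in_setX /= => /andP [fS sS] /andP [fS' sS'] e.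
have [fs _] := surjTP fS; have [ss _] := surjTP sS.
have [fs' _] := surjTP fS'; have [ss' _] := surjTP sS'.
congr (_, _); [apply/ffunP => i | apply/ffunP => j]; apply/val_inj => /=.
  by rewrite -(fA_Mx fs ss) e (fA_Mx fs' ss').
by rewrite -(sA_Mx fs ss) e (sA_Mx fs' ss').
Qed.

Lemma surjT0 d k m : k < m -> #|surjT d k m| = 0.
Proof.
move=> lt; case: (set_0Vmem (surjT d k m)) => [-> | [f fS]]; first by rewrite cards0.
exfalso; have [fs _] := surjTP fS.
have : [set: 'I_m] \subset f @: [set: 'I_k].
  by apply/subsetP => t _; have [i <-] := fs t; exact: imset_f.
move/subset_leq_card; rewrite cardsT card_ord => le.
have := leq_trans le (leq_imset_card _ _); rewrite cardsT card_ord; lia.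
Qed.

Theorem theorem2 (d n k : nat) (hd : 1 <= d) :
  #|Lset d n k| =
  \sum_(0 <= m < (minn n k).+1)
     (m`! * stirling2_le d n m) * (m`! * stirling2_le d k m).
Proof.
have rb : forall A : 'M[bool]_(n, k), #|rt A| <= n.
  by move=> A; rewrite /rt; apply: leq_trans (leq_imset_card _ _) _; rewrite cardsT card_ord.
rewrite -sum1_card (partition_big (fun A => inord #|rt A| : 'I_n.+1) predT) //.
have -> : \sum_(m < n.+1) \sum_(A in Lset d n k | inord #|rt A| == m) 1
        = \sum_(m < n.+1) #|surjT d n m| * #|surjT d k m|.
  apply: eq_bigr => m _; rewrite -card_Lm -sum1_card; apply: eq_bigl => A.
  by rewrite [in RHS]inE -val_eqE /= inordK ?ltnS.
rewrite -(big_mkord xpredT (fun m => #|surjT d n m| * #|surjT d k m|)).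
under [RHS]eq_bigr do rewrite -!card_surjT.
rewrite (big_cat_nat _ (n:=(minn n k).+1)) //=; last by rewrite ltnS geq_minl.
rewrite [X in _ + X]big_nat_cond [X in _ + X]big1 ?addn0 // => m /andP [/andP [lo hi] _].
rewrite (surjT0 d (k:=k)) ?muln0 //; lia.
Qed.
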